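(* Let $k \geq 2$ be an integer, let $G$ be a $(k+1)$-connected $(K_2 \cup kK_1)$-free graph, let $a,b \in V(G)$ be distinct, and let $P$ be a longest $ab$-path in $G$. Then every component of $G - V(P)$ consists of a single vertex.
   Context: All graphs are finite, undirected and simple. For graphs $R, R'$, $R \cup R'$ is their disjoint union and $kR$ is the disjoint union of $k$ copies of $R$; $K_n$ is the complete graph on $n$ vertices. A graph $G$ is $R$-free if it contains no induced subgraph isomorphic to $R$. *)

(* Defs.v *)
From mathcomp Require Import all_boot.
Set Implicit Arguments. Unset Strict Implicit. Unset Printing Implicit Defensive.

Definition simple_graph (T : finType) (e : rel T) : Prop :=
  symmetric e /\ irreflexive e.

Definition induced_rel (T : finType) (e : rel T) (A : {pred T}) : rel T :=
  fun u v => [&& e u v, u \in A & v \in A].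

Definition connected_minus (T : finType) (e : rel T) (S : {set T}) : Prop :=
  forall x y : T, x \notin S -> y \notin S ->
    connect (induced_rel e [pred v | v \notin S]) x y.

Definition kconnected (n : nat) (T : finType) (e : rel T) : Prop :=
  n < #|T| /\ forall S : {set T}, #|S| < n -> connected_minus e S.

Definition has_induced (U T : finType) (eR : rel U) (e : rel T) : Prop :=
  exists f : U -> T, injective f /\ forall x y : U, eR x y = e (f x) (f y).

Definition free_of (U T : finType) (eR : rel U) (e : rel T) : Prop :=
  ~ has_induced eR e.

Definition K2_kK1 (k : nat) : rel 'I_(k.+2) :=
  fun i j => ((val i == 0) && (val j == 1)) || ((val i == 1) && (val j == 0)).

(* an ab-path: the vertex sequence a :: p, consecutive vertices adjacent,
   all vertices distinct, ending at b *)
Definition is_path (T : finType) (e : rel T) (a b : T) (p : seq T) : Prop :=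
  [/\ path e a p, uniq (a :: p) & last a p = b].

Definition longest_path (T : finType) (e : rel T) (a b : T) (p : seq T) : Prop :=
  is_path e a b p /\ forall q, is_path e a b q -> size q <= size p.
Arguments K2_kK1 k : clear implicits.

(* Main.v *)
Require Import Defs.
From mathcomp Require Import all_boot.
From mathcomp Require Import zify.
Set Implicit Arguments. Unset Strict Implicit.

Section Surgery.
Variables (T : finType) (e : rel T) (a b : T) (p : seq T).
Hypothesis esym : symmetric e.
Hypothesis hpath : path e a p.
Hypothesis huniq : uniq (a :: p).
Hypothesis hlast : last a p = b.
Hypothesis hlong : forall q, is_path e a b q -> size q <= size p.

Lemma no_longer q : path e a q -> uniq (a :: q) -> last a q = b ->
  size p < size q -> False.
Proof. move=> h1 h2 h3 h4. have := hlong (And3 h1 h2 h3). by rewrite leqNgt h4. Qed.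

Lemma surg1 P1 y P3 h hp :
  p = P1 ++ y :: P3 ->
  e (last a P1) h -> path e h hp -> e (last h hp) y ->
  uniq (h :: hp) -> all (fun z => z \notin a :: p) (h :: hp) -> False.
Proof.
move=> Ep ex hp' ey hu hall.
move: (hpath); rewrite Ep cat_path /= => /and3P [hP1 _ hP3].
apply: (@no_longer (P1 ++ (h :: hp) ++ y :: P3)).
- by rewrite cat_path hP1 /= ex cat_path hp' /= ey hP3.
- have pe : perm_eq ((a :: P1) ++ (h :: hp) ++ y :: P3)
                    (((a :: P1) ++ y :: P3) ++ (h :: hp)).
    by rewrite -catA perm_cat2l perm_catC.
  rewrite -cat_cons (perm_uniq pe) cat_uniq hu andbT.
  rewrite cat_cons -Ep huniq /= negb_or. move/andP: hall => [-> hall] /=. rewrite -all_predC.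
  by apply: sub_all hall => z.
- by rewrite -hlast Ep !last_cat.
- rewrite Ep !size_cat /=; lia.
Qed.

Lemma last_rev_belast (y : T) M' : last (last y M') (rev (belast y M')) = y.
Proof.
case: M' => [|z M'] //=. by rewrite rev_cons last_rcons.
Qed.

Lemma surg2 P1 y M' y' P3 h hp :
  p = P1 ++ (y :: M') ++ y' :: P3 ->
  e (last a P1) h -> path e h hp -> e (last h hp) (last y M') -> e y y' ->
  uniq (h :: hp) -> all (fun z => z \notin a :: p) (h :: hp) -> False.
Proof.
move=> Ep ex hp' ey eyy hu hall.
move: (hpath); rewrite Ep cat_path /= cat_path /= => /and3P [hP1 _ /andP [hM /andP [_ hP3]]].
have hR : path e (last y M') (rev (belast y M')).
  rewrite rev_path. apply: sub_path hM => u v; by rewrite esym.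
apply: (@no_longer (P1 ++ (h :: hp) ++ rev (y :: M') ++ y' :: P3)).
- rewrite cat_path hP1 /= ex cat_path hp' /= cat_path.
  rewrite lastI rev_rcons /= ey hR /= last_rev_belast eyy hP3.
  done.
- have pe : perm_eq ((a :: P1) ++ (h :: hp) ++ rev (y :: M') ++ y' :: P3)
                    (((a :: P1) ++ (y :: M') ++ y' :: P3) ++ (h :: hp)).
    apply: (@perm_trans _ ((a :: P1) ++ (rev (y :: M') ++ y' :: P3) ++ (h :: hp))).
      by rewrite perm_cat2l perm_catC.
    rewrite -!catA /= perm_cons perm_cat2l.
    have -> : y :: M' ++ y' :: P3 ++ h :: hp = (y :: M') ++ (y' :: P3 ++ h :: hp) by [].
    by rewrite perm_cat2r perm_rev.
  rewrite -cat_cons (perm_uniq pe) cat_uniq hu andbT.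
  rewrite cat_cons -Ep huniq /= negb_or. move/andP: hall => [-> hall] /=. rewrite -all_predC.
  by apply: sub_all hall => z.
- by rewrite -hlast Ep !last_cat.
- rewrite Ep !size_cat /= size_rev /=; lia.
Qed.

Definition succ x := nth a p (index x (a :: p)).

Lemma idx_lt x : x \in a :: p -> x != b -> index x (a :: p) < size p.
Proof.
move=> xs xb. have := xs. rewrite -index_mem.
have -> : size (a :: p) = (size p).+1 by [].
rewrite ltnS leq_eqVlt => /orP [/eqP E|//].
exfalso; move/eqP: xb; apply. rewrite -(nth_index a xs) E -hlast.
exact: (nth_last a (a :: p)).
Qed.
Lemma last_take i : i <= size p -> last a (take i p) = nth a (a :: p) i.
Proof.
case: i => [|n] hn; first by rewrite take0.
rewrite -nth_last size_takel //.
exact: (nth_take a (ltnSn n) p).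
Qed.
Lemma succ_in x : x \in a :: p -> x != b -> succ x \in p.
Proof. move=> xs xb; exact: mem_nth (idx_lt xs xb). Qed.

Lemma succ_inj x x' : x \in a :: p -> x != b -> x' \in a :: p -> x' != b ->
  succ x = succ x' -> x = x'.
Proof.
move=> xs xb xs' xb' E.
have up : uniq p by case/andP: huniq.
have : index x (a :: p) = index x' (a :: p).
  by apply/eqP; rewrite -(nth_uniq a (idx_lt xs xb) (idx_lt xs' xb') up); apply/eqP.
move=> Ei. by rewrite -(nth_index a xs) Ei nth_index.
Qed.

Lemma notadjA x h hp : x \in a :: p -> x != b -> e x h -> path e h hp ->
  e (last h hp) (succ x) -> uniq (h :: hp) ->
  all (fun z => z \notin a :: p) (h :: hp) -> False.
Proof.
move=> xs xb ex hp' ey hu hall.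
have hi := idx_lt xs xb.
apply: (@surg1 (take (index x (a :: p)) p) (succ x) (drop (index x (a :: p)).+1 p) h hp).
- rewrite /succ -(drop_nth a hi). by rewrite cat_take_drop.
- rewrite last_take ?nth_index //. exact: ltnW.
- exact: hp'.
- exact: ey.
- exact: hu.
- exact: hall.
Qed.

Lemma notadjB x x' h hp : x \in a :: p -> x != b -> x' \in a :: p -> x' != b ->
  index x (a :: p) < index x' (a :: p) ->
  e x h -> path e h hp -> e (last h hp) x' -> e (succ x) (succ x') ->
  uniq (h :: hp) -> all (fun z => z \notin a :: p) (h :: hp) -> False.
Proof.
move=> xs xb xs' xb' hij ex hp' ey eyy hu hall.
have hi := idx_lt xs xb. have hj := idx_lt xs' xb'.
move: hij hi hj ey eyy.
rewrite /succ.
set i := index x (a :: p). set j := index x' (a :: p).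
move=> hij hi hj ey eyy.
set M := take (j - i) (drop i p).
have EM : M = nth a p i :: take (j - i).-1 (drop i.+1 p).
  rewrite /M (drop_nth a hi). case E: (j - i) => [|n].
    exfalso. move: E hij. clear. lia.
  by [].
have L1 : last a (take j p) = x'.
  rewrite last_take ?nth_index //. exact: ltnW.
move: L1; rewrite -{1}(subnKC (ltnW hij)) takeD -/M EM last_cat last_take; last exact: ltnW.
rewrite nth_index; last exact: xs.
move=> L1.
apply: (@surg2 (take i p) (nth a p i) (take (j - i).-1 (drop i.+1 p)) (nth a p j) (drop j.+1 p) h hp).
- rewrite -EM catA -takeD subnKC; last exact: ltnW.
  rewrite -(drop_nth a hj). by rewrite cat_take_drop.
- rewrite last_take ?nth_index //. exact: ltnW.
- exact: hp'.
- rewrite -L1 in ey; exact: ey.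
- exact: eyy.
- exact: hu.
- exact: hall.
Qed.
End Surgery.

Lemma path_induced_all (T : finType) (e : rel T) (A : {pred T}) c q :
  path (induced_rel e A) c q -> all (fun z => z \in A) q.
Proof.
elim: q c => [|d q IH] c //=. case/andP => /and3P [_ _ dA] hq. by rewrite dA (IH d hq).
Qed.

Lemma path_induced_last (T : finType) (e : rel T) (A : {pred T}) c q :
  path (induced_rel e A) c q -> c \in A -> last c q \in A.
Proof.
elim: q c => [|d q IH] c //=. case/andP => /and3P [_ _ dA] hq _. exact: IH.
Qed.

Theorem mainTheorem9 (k : nat) (T : finType) (e : rel T) (a b : T) (p : seq T) :
  2 <= k ->
  simple_graph e ->
  kconnected k.+1 e ->
  free_of (K2_kK1 k) e ->
  a != b ->
  longest_path e a b p ->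
  (* every component of G - V(P) is a single vertex *)
  forall x y : T, x \notin (a :: p) -> y \notin (a :: p) ->
    connect (induced_rel e [pred v | v \notin (a :: p)]) x y -> x = y.
Proof.
move=> hk [esym eirr] [hcard hconn] hfree hab [[hpath huniq hlast] hlong] x y xs ys hxy.
case: (eqVneq x y) => // nxy; exfalso.
case/connectP: hxy => q.
case: q => [|z q].
  move=> _ E. by rewrite E eqxx in nxy.
rewrite [path _ _ _]/= => /andP [hxz _] _.
case/and3P: hxz => exz _ zs.
rewrite inE in zs.
set s := a :: p.
set R := induced_rel e [pred v | v \notin s].
set H := [set w | connect R x w].
set NH := [set w | (w \notin H) && [exists h in H, e h w]].
have xH : x \in H by rewrite inE connect0.
have zH : z \in H.
  rewrite inE. apply: connect1. by rewrite /R /induced_rel exz inE xs inE zs.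
have F1 : forall w, w \in H -> w \notin s.
  move=> w; rewrite inE => /connectP [q' hq' ->].
  have := path_induced_last hq'. rewrite inE. move=> hh. exact: (hh xs).
have F2 : forall h w, h \in H -> e h w -> w \notin s -> w \in H.
  move=> h w hH ehw ws. move: (hH); rewrite !inE => hc.
  apply: (connect_trans hc). apply: connect1.
  by rewrite /R /induced_rel ehw !inE (F1 _ hH) ws.
have F3 : forall w, w \in NH -> w \in s.
  move=> w; rewrite inE => /andP [wH /existsP [h /andP [hH ehw]]].
  apply: contraNT wH => ws. exact: F2 hH ehw ws.
have F4 : forall h w, h \in H -> e h w -> w \notin H -> w \in NH.
  move=> h w hH ehw wH. rewrite inE wH /=. apply/existsP; exists h. by rewrite hH ehw.
have Rsym : symmetric R.
  move=> u1 u2. by rewrite /R /induced_rel esym (andbC (u1 \in _)).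
have F5 : forall h h', h \in H -> h' \in H -> exists hp,
    [/\ path e h hp, last h hp = h', uniq (h :: hp) & all (fun w => w \notin s) (h :: hp)].
  move=> h h' hH hH'.
  have hc : connect R h h'.
    move: hH hH'; rewrite !inE => c1 c2.
    apply: connect_trans c2. by rewrite (sym_connect_sym Rsym).
  case/connectP: hc => q' hq' ->.
  case: (shortenP hq') => q'' hq'' uq'' _.
  exists q''. split.
  - apply: sub_path hq'' => u1 u2 /and3P [] //.
  - by [].
  - exact: uq''.
  - rewrite /= (F1 _ hH) /=. have := path_induced_all hq''.
    move=> hall; apply: sub_all hall => w. by rewrite inE.
have huniq' := huniq. have hpath' := hpath.
have LA : forall x0, x0 \in NH -> x0 != b -> succ a p x0 \notin NH.
  move=> x0 x0N x0b. apply/negP => sN.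
  move: (x0N) (sN); rewrite !inE => /andP [_ /existsP [h /andP [hH ehx]]]
                                     /andP [_ /existsP [h' /andP [hH' ehs]]].
  case: (F5 h h' hH hH') => hp [hp' lh uh ah].
  apply: (@notadjA T e a b p hpath huniq hlast hlong x0 h hp (F3 _ x0N) x0b).
  - by rewrite esym.
  - exact: hp'.
  - by rewrite lh.
  - exact: uh.
  - exact: ah.
have LB : forall x1 x2, x1 \in NH -> x1 != b -> x2 \in NH -> x2 != b -> x1 != x2 ->
    e (succ a p x1) (succ a p x2) = false.
  have LB0 : forall x1 x2, x1 \in NH -> x1 != b -> x2 \in NH -> x2 != b ->
      index x1 s < index x2 s -> e (succ a p x1) (succ a p x2) = false.
    move=> x1 x2 x1N x1b x2N x2b lt12. apply/negP => E.
    move: (x1N) (x2N); rewrite !inE => /andP [_ /existsP [h /andP [hH eh1]]]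
                                       /andP [_ /existsP [h' /andP [hH' eh2]]].
    case: (F5 h h' hH hH') => hp [hp' lh uh ah].
    apply: (@notadjB T e a b p esym hpath huniq hlast hlong x1 x2 h hp (F3 _ x1N) x1b (F3 _ x2N) x2b lt12).
    - by rewrite esym.
    - exact: hp'.
    - by rewrite lh.
    - exact: E.
    - exact: uh.
    - exact: ah.
  move=> x1 x2 x1N x1b x2N x2b n12.
  case: (ltngtP (index x1 s) (index x2 s)) => c.
  - exact: LB0.
  - rewrite esym. exact: LB0.
  - exfalso; move/eqP: n12; apply.
    by rewrite -(nth_index a (F3 _ x1N)) -/s c nth_index // F3.
have noadj : forall h w, h \in H -> w \notin H -> w \notin NH -> e h w = false.
  move=> h w hH wH wN. apply/negP => ehw. by move/negP: wN; apply; apply: F4 hH ehw wH.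
have [w [ws wN]] : exists w, w \in s /\ w \notin NH.
  case: (boolP (a \in NH)) => aN.
  - exists (succ a p a). split.
      rewrite /s inE. apply/orP; right. apply: (succ_in hlast); [by rewrite inE eqxx | exact: hab].
    exact: LA.
  - exists a. by rewrite /s inE eqxx.
have cardNH : k.+1 <= #|NH|.
  rewrite leqNgt; apply/negP => lt.
  have hc := hconn NH lt x w.
  have xN : x \notin NH by rewrite inE xH.
  have := hc xN wN.
  have cl : closed (induced_rel e [pred v | v \notin NH]) (mem H).
    move=> c d /and3P [ecd cN dN].
    rewrite inE in cN; rewrite inE in dN.
    apply/idP/idP => [cH|dH].
    - apply: contraNT dN => dH. exact: F4 cH ecd dH.
    - apply: contraNT cN => cH. apply: F4 dH _ cH. by rewrite esym.
  move=> hc'. have := closed_connect cl hc'. rewrite xH.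
  have wH : w \notin H := contraL (F1 w) ws. by rewrite (negbTE wH).
set L := enum (NH :\ b).
have sizeL : k <= size L.
  rewrite /L -cardE. have := cardsD1 b NH. lia.
have Lin : forall j, j < k -> nth x L j \in NH :\ b.
  move=> j hj. rewrite -mem_enum. apply: mem_nth. exact: leq_trans hj sizeL.
have LN : forall j, j < k -> nth x L j \in NH.
  move=> j hj. have := Lin j hj. by rewrite in_setD1 => /andP [_ ->].
have Lb : forall j, j < k -> nth x L j != b.
  move=> j hj. have := Lin j hj. by rewrite in_setD1 => /andP [-> _].
have succs : forall j, j < k -> succ a p (nth x L j) \in s.
  move=> j hj. rewrite /s inE. apply/orP; right.
  apply: (succ_in hlast); [exact: F3 (LN j hj) | exact: Lb].
have succH : forall j, j < k -> succ a p (nth x L j) \notin H.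
  move=> j hj. apply: contraL (succs j hj). exact: F1.
have succN : forall j, j < k -> succ a p (nth x L j) \notin NH.
  move=> j hj. apply: LA; [exact: LN | exact: Lb].
pose f := fun i : 'I_k.+2 => match nat_of_ord i with
  | 0 => x | 1 => z | j.+2 => succ a p (nth x L j) end.
apply: hfree; exists f; split.
- move=> [i1 h1] [i2 h2]; rewrite /f /= => E; apply/val_inj => /=.
  case: i1 h1 E => [|[|j1]] h1; case: i2 h2 => [|[|j2]] h2 //= E.
  + by rewrite E eirr in exz.
  + have := succs j2 h2; rewrite -E. by move/negP: xs.
  + by rewrite E eirr in exz.
  + have := succs j2 h2; rewrite -E. by move/negP: zs.
  + have := succs j1 h1; rewrite E. by move/negP: xs.
  + have := succs j1 h1; rewrite E. by move/negP: zs.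
  + have E2 := succ_inj huniq hlast (F3 _ (LN j1 h1)) (Lb j1 h1) (F3 _ (LN j2 h2)) (Lb j2 h2) E.
    have : j1 = j2.
      have hj1 : j1 < size L by apply: leq_trans sizeL.
      have hj2 : j2 < size L by apply: leq_trans sizeL.
      apply/eqP. by rewrite -(@nth_uniq _ x L j1 j2 hj1 hj2 (enum_uniq _)) E2 eqxx.
    by move=> ->.
- move=> [i1 h1] [i2 h2]; rewrite /K2_kK1 /f /=.
  case: i1 h1 => [|[|j1]] h1; case: i2 h2 => [|[|j2]] h2 /=.
  + by rewrite eirr.
  + by rewrite exz.
  + by rewrite (noadj _ _ xH (succH _ h2) (succN _ h2)).
  + by rewrite esym exz.
  + by rewrite eirr.
  + by rewrite (noadj _ _ zH (succH _ h2) (succN _ h2)).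
  + by rewrite esym (noadj _ _ xH (succH _ h1) (succN _ h1)).
  + by rewrite esym (noadj _ _ zH (succH _ h1) (succN _ h1)).
  + case: (eqVneq j1 j2) => [<-|nj]; first by rewrite eirr.
    rewrite LB //; try exact: LN; try exact: Lb.
    apply: contra nj => /eqP E.
    have E2 : nth x L j1 = nth x L j2 by [].
    have hj1 : j1 < size L by apply: leq_trans sizeL.
    have hj2 : j2 < size L by apply: leq_trans sizeL.
    by rewrite -(@nth_uniq _ x L j1 j2 hj1 hj2 (enum_uniq _)) E2 eqxx.
Qed.
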